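(* Let $R$ be a domain and let $G$ be a finite undirected graph without loops with vertex set $A=\{a_1,\dots,a_n\}$, $n\geqslant 2$, such that the complement graph $\overline{G}$ is connected. Suppose the partially commutative Lie algebra $\mathcal{L}(A;G)=L_1\oplus L_2$ is a direct sum of two subalgebras such that for every $i\in\{1,\dots,n\}$ we have $(a_i)_1=a_i+g_i$ and $(a_i)_2=-g_i$ with $g_i\in\mathcal{L}(A;G)$ and $a_i\notin\mathrm{supp}(\omega_1(g_i))$. Then $g_i=0$ for all $i\in\{1,\dots,n\}$.
   Context: All Lie algebras are over the domain $R$. The complement graph $\overline{G}$ has vertex set $A$, with distinct vertices adjacent iff they are not adjacent in $G$. $\mathcal{L}(A;G)$ is the Lie $R$-algebra presented by generators $A$ and relations $[a_p,a_q]=0$ for all edges $\{a_p,a_q\}$ of $G$. Since the relations are multi-homogeneous, every element $h$ is uniquely a sum of nonzero multi-homogeneous components (multi-degree of a Lie monomial = vector counting occurrences of each $a_p$). $\mathrm{supp}(h)$ is the set of $a_p$ occurring with nonzero exponent in the multi-degree of some component of $h$; $\omega_1(h)$ is the sum of the components of length $1$. A direct sum $L=L_1\oplus L_2$ of subalgebras means $L_1,L_2$ are subalgebras, $L=L_1\oplus L_2$ as $R$-modules and $[L_1,L_2]=0$; for $h\in L$, $(h)_1\in L_1$, $(h)_2\in L_2$ are the unique elements with $h=(h)_1+(h)_2$. *)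

(* Defs.v *)
From HB Require Import structures.
From mathcomp Require Import all_boot all_order all_algebra.
Set Implicit Arguments. Unset Strict Implicit. Unset Printing Implicit Defensive.
Import GRing.Theory.
Local Open Scope ring_scope.

Record lieAlgebra (R : comNzRingType) := LieAlgebra {
  lie_carrier :> lmodType R;
  lie_br : lie_carrier -> lie_carrier -> lie_carrier;
  lie_brlinl : forall (c : R) (x y z : lie_carrier),
      lie_br (c *: x + y) z = c *: lie_br x z + lie_br y z;
  lie_brlinr : forall (c : R) (x y z : lie_carrier),
      lie_br z (c *: x + y) = c *: lie_br z x + lie_br z y;
  lie_brxx : forall x : lie_carrier, lie_br x x = 0;
  lie_jacobi : forall x y z : lie_carrier,
      lie_br x (lie_br y z) + lie_br y (lie_br z x) + lie_br z (lie_br x y) = 0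
}.

Definition lie_hom (R : comNzRingType) (L M : lieAlgebra R) (phi : L -> M) : Prop :=
  (forall (c : R) (x y : L), phi (c *: x + y) = c *: phi x + phi y) /\
  (forall x y : L, phi (lie_br x y) = lie_br (phi x) (phi y)).

(* (L, a) is a presentation of L(A;G): L is the Lie R-algebra generated by
   a_0..a_{n-1} subject exactly to the relations [a_p,a_q] = 0 for edges
   {p,q} of G (universal property). *)
Definition presented (R : comNzRingType) (n : nat) (G : rel 'I_n)
    (L : lieAlgebra R) (a : 'I_n -> L) : Prop :=
  (forall p q, G p q -> lie_br (a p) (a q) = 0) /\
  forall (M : lieAlgebra R) (f : 'I_n -> M),
    (forall p q, G p q -> lie_br (f p) (f q) = 0) ->
    exists phi : L -> M,
      [/\ lie_hom phi, (forall p, phi (a p) = f p) &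
          forall psi : L -> M, lie_hom psi -> (forall p, psi (a p) = f p) ->
            forall x, psi x = phi x].

Definition compl_graph (n : nat) (G : rel 'I_n) : rel 'I_n :=
  fun p q => (p != q) && ~~ G p q.
Definition graph_connected (n : nat) (E : rel 'I_n) : Prop :=
  forall p q, connect E p q.

Inductive lmono (n : nat) : Type :=
  | LLeaf of 'I_n
  | LNode of lmono n & lmono n.

Fixpoint leval (R : comNzRingType) (n : nat) (L : lieAlgebra R) (a : 'I_n -> L)
    (t : lmono n) : L :=
  match t with
  | LLeaf i => a i
  | LNode t1 t2 => lie_br (leval a t1) (leval a t2)
  end.

Fixpoint lmdeg (n : nat) (t : lmono n) (j : 'I_n) : nat :=
  match t with
  | LLeaf i => nat_of_bool (i == j)
  | LNode t1 t2 => (lmdeg t1 j + lmdeg t2 j)%N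
  end.

Definition mhomog (R : comNzRingType) (n : nat) (L : lieAlgebra R) (a : 'I_n -> L)
    (al : {ffun 'I_n -> nat}) (x : L) : Prop :=
  exists (m : nat) (c : 'I_m -> R) (t : 'I_m -> lmono n),
    (forall k j, lmdeg (t k) j = al j) /\ x = \sum_(k < m) c k *: leval a (t k).

Definition mdecomp (R : comNzRingType) (n : nat) (L : lieAlgebra R) (a : 'I_n -> L)
    (h : L) (m : nat) (al : 'I_m -> {ffun 'I_n -> nat}) (x : 'I_m -> L) : Prop :=
  [/\ injective al, (forall k, x k <> 0 /\ mhomog a (al k) (x k)) &
      h = \sum_(k < m) x k].

Definition in_supp (R : comNzRingType) (n : nat) (L : lieAlgebra R) (a : 'I_n -> L)
    (p : 'I_n) (h : L) : Prop :=
  exists (m : nat) (al : 'I_m -> {ffun 'I_n -> nat}) (x : 'I_m -> L),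
    mdecomp a h al x /\ exists k, al k p <> 0%N.

Definition is_omega1 (R : comNzRingType) (n : nat) (L : lieAlgebra R) (a : 'I_n -> L)
    (h w : L) : Prop :=
  exists (m : nat) (al : 'I_m -> {ffun 'I_n -> nat}) (x : 'I_m -> L),
    mdecomp a h al x /\ w = \sum_(k < m | (\sum_(j < n) al k j == 1)%N) x k.

Definition subalg (R : comNzRingType) (L : lieAlgebra R) (S : L -> Prop) : Prop :=
  [/\ S 0, (forall (c : R) x y, S x -> S y -> S (c *: x + y)) &
      (forall x y, S x -> S y -> S (lie_br x y))].

Definition direct_sum (R : comNzRingType) (L : lieAlgebra R) (L1 L2 : L -> Prop) : Prop :=
  [/\ subalg L1, subalg L2,
      (forall h, exists h1 h2, [/\ L1 h1, L2 h2 & h = h1 + h2]),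
      (forall h1 h2 h1' h2', L1 h1 -> L2 h2 -> L1 h1' -> L2 h2' ->
          h1 + h2 = h1' + h2' -> h1 = h1' /\ h2 = h2') &
      (forall x y, L1 x -> L2 y -> lie_br x y = 0)].

Definition dcomp1 (R : comNzRingType) (L : lieAlgebra R) (L1 L2 : L -> Prop) (h x : L) : Prop :=
  L1 x /\ L2 (h - x).
Definition dcomp2 (R : comNzRingType) (L : lieAlgebra R) (L1 L2 : L -> Prop) (h y : L) : Prop :=
  L2 y /\ L1 (h - y).

(* Main.v *)
From HB Require Import structures.
Require Import Defs.
From mathcomp Require Import all_boot all_order all_algebra.
From mathcomp Require Import ring zify.
From Stdlib Require Import ClassicalEpsilon.
Import GRing.Theory.
Local Open Scope ring_scope.

Set Implicit Arguments. Unset Strict Implicit. Unset Printing Implicit Defensive.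


Section LieBasics.
Variables (R : comNzRingType) (L : lieAlgebra R).
Local Notation br := (@lie_br R L).

Lemma br0l z : br 0 z = 0.
Proof.
have h := lie_brlinl 1 0 0 z; rewrite scaler0 addr0 scale1r in h.
by symmetry; apply: (@addrI _ (br 0 z)); rewrite addr0 -h.
Qed.
Lemma br0r z : br z 0 = 0.
Proof.
have h := lie_brlinr 1 0 0 z; rewrite scaler0 addr0 scale1r in h.
by symmetry; apply: (@addrI _ (br z 0)); rewrite addr0 -h.
Qed.
Lemma brDl x y z : br (x + y) z = br x z + br y z.
Proof. by have h := lie_brlinl 1 x y z; rewrite !scale1r in h. Qed.
Lemma brDr x y z : br z (x + y) = br z x + br z y.
Proof. by have h := lie_brlinr 1 x y z; rewrite !scale1r in h. Qed.
Lemma brZl c x z : br (c *: x) z = c *: br x z.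
Proof. by have h := lie_brlinl c x 0 z; rewrite !addr0 br0l addr0 in h. Qed.
Lemma brZr c x z : br z (c *: x) = c *: br z x.
Proof. by have h := lie_brlinr c x 0 z; rewrite !addr0 br0r addr0 in h. Qed.
Lemma brNl x z : br (- x) z = - br x z.
Proof. by rewrite -scaleN1r brZl scaleN1r. Qed.
Lemma brNr x z : br z (- x) = - br z x.
Proof. by rewrite -scaleN1r brZr scaleN1r. Qed.
Lemma brC x y : br x y = - br y x.
Proof.
have h := lie_brxx (x + y).
rewrite brDl !brDr !lie_brxx add0r addr0 in h.
by apply/eqP; rewrite -addr_eq0 h.
Qed.
Lemma br_suml (I : Type) (r : seq I) (P : pred I) (F : I -> L) z :
  br (\sum_(i <- r | P i) F i) z = \sum_(i <- r | P i) br (F i) z.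
Proof. by apply: (big_morph (fun x => br x z)); [move=> ??; exact: brDl | exact: br0l]. Qed.
Lemma br_sumr (I : Type) (r : seq I) (P : pred I) (F : I -> L) z :
  br z (\sum_(i <- r | P i) F i) = \sum_(i <- r | P i) br z (F i).
Proof. by apply: (big_morph (fun x => br z x)); [move=> ??; exact: brDr | exact: br0r]. Qed.
End LieBasics.

Section HomBasics.
Variables (R : comNzRingType) (L M : lieAlgebra R) (phi : L -> M).
Hypothesis hphi : lie_hom phi.
Lemma hom0 : phi 0 = 0.
Proof.
have h := hphi.1 1 0 0; rewrite scaler0 addr0 scale1r in h.
by symmetry; apply: (@addrI _ (phi 0)); rewrite addr0 -h.
Qed.
Lemma homD x y : phi (x + y) = phi x + phi y.
Proof. by have h := hphi.1 1 x y; rewrite !scale1r in h. Qed.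
Lemma homZ c x : phi (c *: x) = c *: phi x.
Proof. by have h := hphi.1 c x 0; rewrite !addr0 hom0 addr0 in h. Qed.
Lemma homN x : phi (- x) = - phi x.
Proof. by rewrite -scaleN1r homZ scaleN1r. Qed.
Lemma homB x y : phi (x - y) = phi x - phi y.
Proof. by rewrite homD homN. Qed.
Lemma hom_br x y : phi (lie_br x y) = lie_br (phi x) (phi y).
Proof. exact: hphi.2. Qed.
Lemma hom_sum (I : Type) (r : seq I) (P : pred I) (F : I -> L) :
  phi (\sum_(i <- r | P i) F i) = \sum_(i <- r | P i) phi (F i).
Proof. by apply: (big_morph phi); [exact: homD | exact: hom0]. Qed.
End HomBasics.

Fixpoint lsize (n : nat) (t : lmono n) : nat :=
  match t with LLeaf _ => 1 | LNode t1 t2 => (lsize t1 + lsize t2)%N end.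

Lemma lsize_gt0 n (t : lmono n) : (0 < lsize t)%N.
Proof. by elim: t => //= t1 IH1 t2 IH2; rewrite addn_gt0 IH1. Qed.

Section Span.
Variables (R : comNzRingType) (n : nat) (L : lieAlgebra R) (a : 'I_n -> L).
Local Notation br := (@lie_br R L).

Definition comb (s : seq (R * lmono n)) : L := \sum_(x <- s) x.1 *: leval a x.2.
Definition inF (d : nat) (y : L) :=
  exists s : seq (R * lmono n), all (fun x => d <= lsize x.2)%N s /\ y = comb s.

Lemma inF0 d : inF d 0.
Proof. by exists [::]; rewrite /comb big_nil. Qed.
Lemma inFD d x y : inF d x -> inF d y -> inF d (x + y).
Proof.
move=> [s [hs ->]] [s' [hs' ->]]; exists (s ++ s').
by rewrite all_cat hs hs' /comb big_cat.
Qed.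
Lemma inFZ d c x : inF d x -> inF d (c *: x).
Proof.
move=> [s [hs ->]]; exists [seq (c * x.1, x.2) | x <- s]; split.
  by rewrite all_map.
rewrite /comb big_map scaler_sumr; apply: eq_bigr => z _ /=.
by rewrite scalerA.
Qed.
Lemma inF_mono d d' x : (d' <= d)%N -> inF d x -> inF d' x.
Proof.
move=> le [s [hs ->]]; exists s; split => //.
by apply: sub_all hs => y /= /(leq_trans le).
Qed.
Lemma inF_mono1 d t : (d <= lsize t)%N -> inF d (leval a t).
Proof.
move=> h; exists [:: (1, t)]; rewrite /= h; split => //.
by rewrite /comb big_seq1 scale1r.
Qed.
Lemma inF_sum d (I : Type) (r : seq I) (P : pred I) (F : I -> L) :
  (forall i, P i -> inF d (F i)) -> inF d (\sum_(i <- r | P i) F i).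
Proof.
move=> h; apply: (big_ind (inF d)) => //; [exact: inF0 | exact: inFD].
Qed.
Lemma inF_sum_all d (T : Type) (P : pred T) (s : seq T) (F : T -> L) :
  all P s -> (forall x, P x -> inF d (F x)) -> inF d (\sum_(x <- s) F x).
Proof.
move=> hs h; elim: s hs => [_|x s IH /= /andP[px ps]]; first by rewrite big_nil; exact: inF0.
by rewrite big_cons; apply: inFD; [apply: h | apply: IH].
Qed.
Lemma inF_br d e x y : inF d x -> inF e y -> inF (d + e) (br x y).
Proof.
move=> [s [hs ->]] [s' [hs' ->]].
rewrite /comb br_suml; apply: (inF_sum_all hs) => u hu.
rewrite brZl br_sumr; apply: inFZ; apply: (inF_sum_all hs') => v hv.
rewrite brZr; apply: inFZ.
have -> : br (leval a u.2) (leval a v.2) = leval a (LNode u.2 v.2) by [].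
by apply: inF_mono1 => /=; apply: leq_add.
Qed.
Lemma inF_comb d s : all (fun x => d <= lsize x.2)%N s -> inF d (comb s).
Proof. by move=> h; exists s. Qed.
End Span.


Section SubLie.
Variables (R : comNzRingType) (L : lieAlgebra R) (P : L -> Prop).
Hypothesis P0 : P 0.
Hypothesis PD : forall (c : R) x y, P x -> P y -> P (c *: x + y).
Hypothesis Pbr : forall x y, P x -> P y -> P (lie_br x y).
Definition pb (y : L) : bool := if excluded_middle_informative (P y) then true else false.
Lemma pbP y : pb y <-> P y.
Proof. by rewrite /pb; case: excluded_middle_informative. Qed.
Fact pb_closed : submod_closed pb.
Proof. split; first by apply/pbP. by move=> c u v /pbP pu /pbP pv; apply/pbP; apply: PD. Qed.
HB.instance Definition _ := GRing.isSubmodClosed.Build R L pb (GRing.submod_closed_semi pb_closed).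
Inductive spanT : Type := SpanT (u : L) of pb u.
Definition spval (x : spanT) := let: SpanT u _ := x in u.
HB.instance Definition _ := [isSub of spanT for spval].
HB.instance Definition _ := [Choice of spanT by <:].
HB.instance Definition _ := [SubChoice_isSubZmodule of spanT by <:].
HB.instance Definition _ := [SubZmodule_isSubLmodule of spanT by <:].

Lemma spP (x : spanT) : pb (spval x). Proof. by case: x. Qed.
Lemma pb_br x y : pb x -> pb y -> pb (lie_br x y).
Proof. by move=> /pbP hx /pbP hy; apply/pbP; apply: Pbr. Qed.
Definition brS (x y : spanT) : spanT := SpanT (pb_br (spP x) (spP y)).
Lemma valZD (c : R) (x y : spanT) : val (c *: x + y) = c *: val x + val y :> L.
Proof. by rewrite !SubK. Qed.
Lemma valD (x y : spanT) : val (x + y) = val x + val y :> L.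
Proof. by have := valZD 1 x y; rewrite !scale1r. Qed.
Lemma val0 : val (0 : spanT) = 0 :> L.
Proof. by rewrite SubK. Qed.
Lemma valbr (x y : spanT) : val (brS x y) = lie_br (val x) (val y) :> L.
Proof. by []. Qed.

Fact brS_linl (c : R) (x y z : spanT) : brS (c *: x + y) z = c *: brS x z + brS y z.
Proof. by apply: val_inj; rewrite valbr !valZD !valbr lie_brlinl. Qed.
Fact brS_linr (c : R) (x y z : spanT) : brS z (c *: x + y) = c *: brS z x + brS z y.
Proof. by apply: val_inj; rewrite valbr !valZD !valbr lie_brlinr. Qed.
Fact brS_xx (x : spanT) : brS x x = 0.
Proof. by apply: val_inj; rewrite val0 valbr lie_brxx. Qed.
Fact brS_jacobi (x y z : spanT) :
  brS x (brS y z) + brS y (brS z x) + brS z (brS x y) = 0.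
Proof.
apply: val_inj; rewrite val0 !valD !valbr; exact: lie_jacobi.
Qed.
Definition spanLie : lieAlgebra R := LieAlgebra brS_linl brS_linr brS_xx brS_jacobi.
End SubLie.

Section Spanning.
Variables (R : comNzRingType) (n : nat) (G : rel 'I_n) (L : lieAlgebra R) (a : 'I_n -> L).
Hypothesis hp : presented G a.

Let P := inF a 1.
Let P0 : P 0. Proof. exact: inF0. Qed.
Let PD : forall (c : R) x y, P x -> P y -> P (c *: x + y).
Proof. by move=> c x y hx hy; apply: inFD => //; apply: inFZ. Qed.
Let Pbr : forall x y, P x -> P y -> P (lie_br x y).
Proof. by move=> x y hx hy; apply: (@inF_mono _ _ _ _ 2); [ | apply: (inF_br hx hy)]. Qed.

Lemma id_hom (M : lieAlgebra R) : lie_hom (@id M).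
Proof. by []. Qed.

Lemma span_all y : inF a 1 y.
Proof.
pose M := spanLie P0 PD Pbr.
have pa : forall p, pb P (a p) by move=> p; apply/pbP; exact: (@inF_mono1 R n L a 1 (LLeaf p) (leqnn 1)).
pose f (p : 'I_n) : M := SpanT (pa p).
have hf : forall p q, G p q -> lie_br (f p) (f q) = 0.
  move=> p q gpq; apply: val_inj; rewrite valbr val0 /=; exact: hp.1.
have [phi [hphi hphia _]] := hp.2 M f hf.
have [phi0 [h0 h0a h0u]] := hp.2 L a hp.1.
have e1 := h0u id (id_hom L) (fun p => erefl).
have hv : lie_hom (fun x => val (phi x) : L).
  split.
    by move=> c x z; rewrite (hphi.1 c x z) valZD.
  by move=> x z; rewrite (hphi.2 x z) valbr.
have e2 := h0u _ hv (fun p => congr1 val (hphia p)).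
have -> : y = val (phi y) by rewrite e2 -e1.
by apply/pbP; apply: spP.
Qed.
End Spanning.


Lemma sum_antisym (V : zmodType) (N : nat) (F : 'I_N -> 'I_N -> V) :
  (forall i j, F j i = - F i j) -> (forall i, F i i = 0) ->
  \sum_(i < N) \sum_(j < N) F i j = 0.
Proof.
move=> hA h0.
pose A := \sum_(i < N) \sum_(j < N) (if (i < j)%N then F i j else 0).
pose B := \sum_(i < N) \sum_(j < N) (if (j < i)%N then F i j else 0).
have -> : \sum_(i < N) \sum_(j < N) F i j = A + B.
  rewrite /A /B -big_split; apply: eq_bigr => i _.
  rewrite -big_split; apply: eq_bigr => j _.
  case: (ltngtP i j) => [lt|lt|eq] /=; rewrite ?addr0 ?add0r //.
  have e : i = j by exact: ord_inj.
  by rewrite e h0.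
have -> : B = - A.
  rewrite /B /A exchange_big -sumrN; apply: eq_bigr => i _.
  rewrite -sumrN; apply: eq_bigr => j _.
  by case: ifP => _; [rewrite hA | rewrite oppr0].
by rewrite subrr.
Qed.

Section Current.
Variables (R : comNzRingType) (L : lieAlgebra R) (D : nat).
Local Notation br := (@lie_br R L).
Definition CT := {ffun 'I_D.+1 -> (L : lmodType R)}.
Definition ind (b : bool) : R := (b : nat)%:R.

Definition conv (f g : CT) : CT :=
  [ffun k : 'I_D.+1 => \sum_(i < D.+1) \sum_(j < D.+1) ind (i + j == k)%N *: br (f i) (g j)].

Fact conv_linl (c : R) (f g h : CT) : conv (c *: f + g) h = c *: conv f h + conv g h.
Proof.
apply/ffunP => k; rewrite !ffunE scaler_sumr -big_split; apply: eq_bigr => i _.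
rewrite scaler_sumr -big_split; apply: eq_bigr => j _.
by rewrite !ffunE lie_brlinl scalerDr !scalerA mulrC.
Qed.
Fact conv_linr (c : R) (f g h : CT) : conv h (c *: f + g) = c *: conv h f + conv h g.
Proof.
apply/ffunP => k; rewrite !ffunE scaler_sumr -big_split; apply: eq_bigr => i _.
rewrite scaler_sumr -big_split; apply: eq_bigr => j _.
by rewrite !ffunE lie_brlinr scalerDr !scalerA mulrC.
Qed.
Fact conv_xx (f : CT) : conv f f = 0.
Proof.
apply/ffunP => k; rewrite !ffunE; apply: sum_antisym.
  by move=> i j; rewrite addnC (brC (f j)) scalerN.
by move=> i; rewrite lie_brxx scaler0.
Qed.

Lemma sum_pick (x : nat) (F : nat -> R) :
  \sum_(j < D.+1) ind (j == x :> nat) * F j = ind (x < D.+1)%N * F x.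
Proof.
case: (ltnP x D.+1) => h.
  rewrite (bigD1 (Ordinal h)) //= big1 ?addr0 /= ?eqxx // => j neq.
  suff -> : (j == x :> nat) = false by rewrite /ind mul0r.
  by apply/negP => /eqP e; move/eqP: neq; apply; apply: val_inj.
rewrite big1 /ind /= ?mul0r // => j _.
suff -> : (j == x :> nat) = false by rewrite mul0r.
by apply/negP => /eqP e; move: (ltn_ord j); rewrite e ltnNge h.
Qed.

Definition T3 (f g h : CT) (k : nat) : L :=
  \sum_(i < D.+1) \sum_(l < D.+1) \sum_(m < D.+1)
     ind (i + l + m == k)%N *: br (f i) (br (g l) (h m)).

Lemma conv_conv (f g h : CT) (k : 'I_D.+1) : conv f (conv g h) k = T3 f g h k.
Proof.
rewrite ffunE; apply: eq_bigr => i _.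
under eq_bigr => j _ do rewrite ffunE br_sumr scaler_sumr.
rewrite exchange_big; apply: eq_bigr => l _.
under eq_bigr => j _ do rewrite br_sumr scaler_sumr.
rewrite exchange_big; apply: eq_bigr => m _.
under eq_bigr => j _ do rewrite brZr scalerA.
rewrite -scaler_suml; congr (_ *: _).
rewrite (eq_bigr (fun j : 'I_D.+1 => ind (j == (l + m)%N :> nat) * ind (i + j == k)%N)); last first.
  move=> j _; rewrite mulrC; congr (_ * _); rewrite /ind; apply: congr1; apply: congr1. exact: eq_sym.
rewrite (sum_pick (l + m) (fun x => ind (i + x == k)%N)) /ind; case: (ltnP (l + m) D.+1) => hlm; first by rewrite mul1r addnA.
rewrite mul0r; suff -> : (i + l + m == k)%N = false by [].
apply/negP => /eqP e; move: (ltn_ord k); rewrite -e ltnNge.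
by rewrite -addnA (leq_trans hlm) // leq_addl.
Qed.

Lemma conv_conv' (f g h : CT) : conv f (conv g h) = [ffun k : 'I_D.+1 => T3 f g h k].
Proof. by apply/ffunP => k; rewrite conv_conv ffunE. Qed.

Fact conv_jacobi (f g h : CT) :
  conv f (conv g h) + conv g (conv h f) + conv h (conv f g) = 0.
Proof.
rewrite !conv_conv'; apply/ffunP => k; rewrite !ffunE /T3.
have e2 : \sum_(i < D.+1) \sum_(l < D.+1) \sum_(m < D.+1)
     ind (i + l + m == k)%N *: br (g i) (br (h l) (f m)) =
   \sum_(i < D.+1) \sum_(l < D.+1) \sum_(m < D.+1)
     ind (i + l + m == k)%N *: br (g l) (br (h m) (f i)).
  under eq_bigr => i _ do rewrite exchange_big.
  rewrite exchange_big; apply: eq_bigr => i _; apply: eq_bigr => l _; apply: eq_bigr => m _.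
  by rewrite [(l + m + i)%N]addnC addnA.
have e3 : \sum_(i < D.+1) \sum_(l < D.+1) \sum_(m < D.+1)
     ind (i + l + m == k)%N *: br (h i) (br (f l) (g m)) =
   \sum_(i < D.+1) \sum_(l < D.+1) \sum_(m < D.+1)
     ind (i + l + m == k)%N *: br (h m) (br (f i) (g l)).
  rewrite exchange_big; apply: eq_bigr => i _.
  rewrite exchange_big; apply: eq_bigr => l _; apply: eq_bigr => m _.
  by rewrite [(m + i)%N]addnC -addnA [(m + _)%N]addnC addnA.
rewrite e2 e3 -!big_split /= big1 // => i _; rewrite -!big_split /= big1 // => l _.
rewrite -!big_split /= big1 // => m _.
by rewrite -!scalerDr lie_jacobi scaler0.
Qed.

Definition CTLie : lieAlgebra R := LieAlgebra conv_linl conv_linr conv_xx conv_jacobi.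

Definition delta (d : nat) (x : L) : CT := [ffun k : 'I_D.+1 => ind (k == d :> nat) *: x].

Lemma conv_delta d e x y : conv (delta d x) (delta e y) = delta (d + e) (br x y).
Proof.
apply/ffunP => k; rewrite !ffunE.
under eq_bigr => i _ do under eq_bigr => j _ do rewrite !ffunE brZl brZr !scalerA.
under eq_bigr => i _ do rewrite -scaler_suml.
rewrite -scaler_suml; congr (_ *: _).
rewrite (eq_bigr (fun i : 'I_D.+1 => ind (i == d :> nat) * (ind (e < D.+1)%N * ind (i + e == k)%N))); last first.
  move=> i _.
  rewrite (eq_bigr (fun j : 'I_D.+1 => ind (j == e :> nat) * (ind (i == d :> nat) * ind (i + j == k)%N))); last first.
    by move=> j _; ring.
  by rewrite (sum_pick e (fun x => ind (i == d :> nat) * ind (i + x == k)%N)); ring.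
rewrite (sum_pick d (fun x => ind (e < D.+1)%N * ind (x + e == k)%N)) /ind.
case hd: (d < D.+1)%N; case he: (e < D.+1)%N; rewrite /= ?mul1r ?mul0r ?mulr0 //.
all: (try move/negbT: hd => hd); (try move/negbT: he => he).
all: first [by rewrite eq_sym | idtac].
all: have -> : (k == (d + e)%N :> nat) = false by apply/negP => /eqP ee; move: (ltn_ord k) hd he; rewrite ee; lia.
all: by [].
Qed.

Definition sumC (f : CT) : L := \sum_(k < D.+1) f k.
Lemma sumC_delta d x : sumC (delta d x) = ind (d < D.+1)%N *: x.
Proof.
rewrite /sumC; under eq_bigr => k _ do rewrite ffunE.
rewrite -scaler_suml; congr (_ *: _).
rewrite (eq_bigr (fun k : 'I_D.+1 => ind (k == d :> nat) * 1)); first by rewrite (sum_pick d (fun _ => 1)) mulr1.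
by move=> k _; rewrite mulr1.
Qed.
End Current.


Section Direct.
Variables (R : comNzRingType) (n : nat) (G : rel 'I_n) (L : lieAlgebra R) (a : 'I_n -> L).
Hypothesis hp : presented G a.

Lemma sumC0 D : sumC (0 : CT L D) = 0.
Proof. by rewrite /sumC big1 // => k _; rewrite ffunE. Qed.
Lemma sumCD D (f g : CT L D) : sumC (f + g) = sumC f + sumC g.
Proof. by rewrite /sumC -big_split; apply: eq_bigr => k _; rewrite ffunE. Qed.
Lemma sumCZ D c (f : CT L D) : sumC (c *: f) = c *: sumC f.
Proof. by rewrite /sumC scaler_sumr; apply: eq_bigr => k _; rewrite ffunE. Qed.

Lemma direct0 (D : nat) s s' :
  all (fun x => lsize x.2 <= D)%N s -> all (fun x => D < lsize x.2)%N s' ->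
  comb a s = comb a s' -> comb a s = 0.
Proof.
move=> hs hs' e.
pose M := CTLie L D.
pose f p : M := delta D 1 (a p).
have hf : forall p q, G p q -> lie_br (f p) (f q) = 0.
  move=> p q gpq; rewrite /f /=.
  change (conv (delta D 1 (a p)) (delta D 1 (a q)) = 0).
  rewrite conv_delta hp.1 //; apply/ffunP => k; rewrite !ffunE scaler0.
  by [].
have [tau [htau htaua _]] := hp.2 M f hf.
have tl : forall t, tau (leval a t) = delta D (lsize t) (leval a t).
  elim => [i|t1 IH1 t2 IH2] /=; first by rewrite htaua.
  by rewrite (hom_br htau) IH1 IH2 /=; exact: conv_delta.
have key : forall s0, sumC (tau (comb a s0)) =
    \sum_(x <- s0) x.1 *: (ind R (lsize x.2 < D.+1)%N *: leval a x.2).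
  elim => [|x s0 IH]; first by rewrite /comb !big_nil (hom0 htau) sumC0.
  rewrite /comb !big_cons (homD htau) sumCD (homZ htau) sumCZ tl sumC_delta.
  by rewrite -IH.
have e1 : sumC (tau (comb a s)) = comb a s.
  rewrite key; elim: s hs {e} => [|x s IH] /= ; first by rewrite /comb !big_nil.
  move=> /andP[hx hs]; rewrite /comb !big_cons -/(comb a s) -IH // ltnS hx /ind /=.
  by rewrite scale1r.
have e2 : sumC (tau (comb a s')) = 0.
  rewrite key; elim: s' hs' {e} => [|x s' IH] /= ; first by rewrite !big_nil.
  move=> /andP[hx hs']; rewrite !big_cons IH // ltnS leqNgt hx /ind /=.
  by rewrite scale0r scaler0 addr0.
by rewrite -e1 e e2.
Qed.
End Direct.


Section NAlg.
Variables (R : comNzRingType) (n : nat) (G : rel 'I_n).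
Definition NT := ('rV[R]_n * 'M[R]_n)%type.
Lemma pairE (x y : NT) : x.1 = y.1 -> x.2 = y.2 -> x = y.
Proof. by case: x; case: y => ? ? ? ? /= -> ->. Qed.
Lemma NT1 (c : R) (x y : NT) : (c *: x + y).1 = c *: x.1 + y.1. Proof. by []. Qed.
Lemma NT2 (c : R) (x y : NT) : (c *: x + y).2 = c *: x.2 + y.2. Proof. by []. Qed.
Lemma NTD1 (x y : NT) : (x + y).1 = x.1 + y.1. Proof. by []. Qed.
Lemma NTD2 (x y : NT) : (x + y).2 = x.2 + y.2. Proof. by []. Qed.
Definition brN (x y : NT) : NT :=
  (0, \matrix_(r, s) (if G r s then 0 else x.1 0 r * y.1 0 s - x.1 0 s * y.1 0 r)).

Fact brN_linl (c : R) (x y z : NT) : brN (c *: x + y) z = c *: brN x z + brN y z.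
Proof.
apply: pairE; first by rewrite NT1 /= scaler0 addr0.
rewrite NT2 /= ?NT1; apply/matrixP => r s; rewrite !mxE; case: (G r s); first by rewrite mulr0 addr0.
ring.
Qed.
Fact brN_linr (c : R) (x y z : NT) : brN z (c *: x + y) = c *: brN z x + brN z y.
Proof.
apply: pairE; first by rewrite NT1 /= scaler0 addr0.
rewrite NT2 /= ?NT1; apply/matrixP => r s; rewrite !mxE; case: (G r s); first by rewrite mulr0 addr0.
ring.
Qed.
Fact brN_xx (x : NT) : brN x x = 0.
Proof.
rewrite /brN; congr (_, _); apply/matrixP => r s; rewrite !mxE; case: (G r s) => //.
by rewrite [X in _ - X]mulrC subrr.
Qed.
Fact brN_jacobi (x y z : NT) : brN x (brN y z) + brN y (brN z x) + brN z (brN x y) = 0.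
Proof.
apply: pairE; first by rewrite !NTD1 /= !addr0.
rewrite !NTD2 /=.
apply/matrixP => r s; rewrite !mxE.
by case: (G r s); rewrite ?mulr0 ?subrr ?addr0.
Qed.
Definition NLie : lieAlgebra R := LieAlgebra brN_linl brN_linr brN_xx brN_jacobi.
End NAlg.

Section Eps.
Variables (R : comNzRingType) (n : nat) (G : rel 'I_n) (L : lieAlgebra R) (a : 'I_n -> L).
Hypothesis hG : symmetric G.
Hypothesis hp : presented G a.

Definition gen (p : 'I_n) : NLie R G := (\row_j ind R (p == j), 0).

Lemma gen_rel p q : G p q -> lie_br (gen p) (gen q) = 0.
Proof.
move=> gpq; rewrite /= /brN /gen /=; congr (_, _).
apply/matrixP => r s; rewrite !mxE; case grs: (G r s) => //.
rewrite /ind.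
have [epr|npr] := eqVneq p r; have [eqs|nqs] := eqVneq q s;
  have [eps|nps] := eqVneq p s; have [eqr|nqr] := eqVneq q r => //=;
  rewrite ?mul0r ?mulr0 ?subrr ?sub0r ?subr0 ?oppr0 //.
all: try (by move: grs; rewrite -epr -eqs gpq).
all: try (by move: grs; rewrite -eps -eqr hG gpq).
Qed.

End Eps.

Definition isnode n (t : lmono n) : bool := if t is LNode _ _ then true else false.

Section Key.
Variables (R : comNzRingType) (n : nat) (G : rel 'I_n) (L : lieAlgebra R) (a : 'I_n -> L).
Hypothesis hp : presented G a.
Variable eps : L -> 'rV[R]_n.
Hypothesis epsL : forall (c : R) x y, eps (c *: x + y) = c *: eps x + eps y.
Hypothesis epsA : forall p, eps (a p) = \row_j ind R (p == j).
Hypothesis epsB : forall x y, eps (lie_br x y) = 0.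

Lemma eps0 : eps 0 = 0.
Proof.
have h := epsL 1 0 0; rewrite scaler0 addr0 scale1r in h.
by symmetry; apply: (@addrI _ (eps 0)); rewrite addr0 -h.
Qed.
Lemma epsD x y : eps (x + y) = eps x + eps y.
Proof. by have h := epsL 1 x y; rewrite !scale1r in h. Qed.
Lemma epsZ c x : eps (c *: x) = c *: eps x.
Proof. by have h := epsL c x 0; rewrite !addr0 eps0 addr0 in h. Qed.

Lemma sum_gen (i : 'I_n) : \sum_(j < n) ind R (i == j) *: a j = a i.
Proof.
rewrite (bigD1 i) //= big1 ?addr0 /ind ?eqxx ?scale1r // => j nji.
by rewrite eq_sym (negbTE nji) scale0r.
Qed.

Lemma leaf_decomp s : comb a s =
  \sum_(j < n) eps (comb a s) 0 j *: a j + comb a [seq x <- s | isnode x.2].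
Proof.
elim: s => [|x s IH]; first by rewrite /comb !big_nil eps0 big1 ?addr0 // => j _; rewrite mxE scale0r.
rewrite /= /comb !big_cons -!/(comb a _) epsD epsZ.
case: x => c [i|t1 t2] /=.
  rewrite epsA.
  under eq_bigr => j _ do rewrite !mxE scalerDl -scalerA.
  by rewrite big_split /= -scaler_sumr sum_gen -addrA -IH.
rewrite epsB scaler0 add0r /comb big_cons -/(comb a _) /=.
by rewrite {1}IH addrCA.
Qed.

Lemma eps0_F2 y : inF a 1 y -> eps y = 0 -> inF a 2 y.
Proof.
move=> [s [hs ->]] he; rewrite leaf_decomp he.
rewrite big1 ?add0r; last by move=> j _; rewrite mxE scale0r.
apply: inF_comb; elim: s hs {he} => [|x s IH] //= /andP[hx hs].
case: x hx => c [i|t1 t2] //= _; first exact: IH.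
rewrite IH // andbT.
by have := lsize_gt0 t1; have := lsize_gt0 t2; lia.
Qed.

Lemma bound_all (s : seq (R * lmono n)) : exists D, all (fun x => lsize x.2 <= D)%N s.
Proof.
elim: s => [|x s [D hD]]; first by exists 0%N.
exists (maxn (lsize x.2) D); rewrite /= leq_maxl /=.
by apply: sub_all hD => y /= h; rewrite (leq_trans h) // leq_maxr.
Qed.

Lemma proj_zero (phi : L -> L) : lie_hom phi -> (forall x, phi (phi x) = phi x) ->
  (forall i, eps (phi (a i)) = 0) -> forall y, phi y = 0.
Proof.
move=> hphi hid h0.
have F2 i : inF a 2 (phi (a i)) by apply: eps0_F2; [exact: span_all hp _ | exact: h0].
have Ft : forall t, inF a (lsize t).+1 (phi (leval a t)).
  elim => [i|t1 IH1 t2 IH2] //=.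
  rewrite (hom_br hphi); apply: (@inF_mono _ _ _ _ ((lsize t1).+1 + (lsize t2).+1)).
    by rewrite addSn addnS ltnW.
  exact: inF_br.
have Fd : forall d y, inF a d y -> inF a d.+1 (phi y).
  move=> d y [s [hs ->]]; rewrite /comb (hom_sum hphi); apply: (inF_sum_all hs) => x hx.
  by rewrite (homZ hphi); apply: inFZ; apply: (inF_mono _ (Ft x.2)).
have Fk : forall k y, inF a k.+1 (phi y).
  elim => [|k IH] y; first exact: span_all hp _.
  by rewrite -hid; apply: Fd.
move=> y.
have [s [_ e]] := span_all hp (phi y).
have [D hD] := bound_all s.
have [s' [hs' e']] := Fk D y.
by rewrite e; apply: (direct0 hp hD hs'); rewrite -e -e'.
Qed.
End Key.


Section Comb.
Variables (R : idomainType) (n : nat) (G : rel 'I_n) (p q : 'I_n -> 'I_n -> R).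
Hypothesis hpq : forall i x, p i x + q i x = ind R (i == x).
Hypothesis hH : forall i j r s, ~~ G r s -> p i r * q j s - p i s * q j r = 0.

Let qE i x : q i x = ind R (i == x) - p i x.
Proof. by rewrite -(hpq i x) addrC addKr. Qed.

Definition vp x := forall i, p i x = 0.
Definition vq x := forall i, q i x = 0.

Lemma not_both x : vp x -> vq x -> False.
Proof.
move=> hp hq; have := hpq x x; rewrite hp hq addr0 /ind eqxx /=.
by move/eqP; rewrite eq_sym oner_eq0.
Qed.

Lemma edge_lemma r s : compl_graph G r s -> (vp r /\ vp s) \/ (vq r /\ vq s).
Proof.
move=> /andP[rs ngrs].
have srn : (s == r) = false by rewrite eq_sym (negbTE rs).
have hrr := hH r r ngrs; have hss := hH s s ngrs.
have hrs := hH r s ngrs; have hsr := hH s r ngrs.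
rewrite !qE /ind !eqxx (negbTE rs) srn /= in hrr hss hrs hsr.
have b0 : p r s = 0.
  by transitivity (- (p r r * (0%:R - p r s) - p r s * (1%:R - p r r))); [ring | rewrite hrr oppr0].
have c0 : p s r = 0.
  by transitivity (p s r * (1%:R - p s s) - p s s * (0%:R - p s r)); [ring | rewrite hss].
rewrite b0 c0 in hrs hsr.
have ad : p r r = p s s.
  apply/eqP; rewrite -subr_eq0; apply/eqP.
  by transitivity ((p r r * (1%:R - p s s) - 0 * (0%:R - 0)) + (0 * (0%:R - 0) - p s s * (1%:R - p r r))); [ring | rewrite hrs hsr addr0].
have : p r r * (1 - p r r) = 0.
  by transitivity (p r r * (1%:R - p s s) - 0 * (0%:R - 0)); [rewrite ad; ring | rewrite hrs].
move/eqP; rewrite mulf_eq0 => /orP[/eqP a0 | /eqP a1].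
  left; split => i.
    have h := hH i s ngrs; rewrite !qE /ind !eqxx srn /= c0 -ad a0 in h.
    by transitivity (p i r * (1%:R - 0) - p i s * (0%:R - 0)); [ring | rewrite h].
  have h := hH i r ngrs; rewrite !qE /ind !eqxx (negbTE rs) /= b0 a0 in h.
  by transitivity (- (p i r * (0%:R - 0) - p i s * (1%:R - 0))); [ring | rewrite h oppr0].
have a1' : p r r = 1 by apply/eqP; rewrite -subr_eq0 -opprB oppr_eq0 a1.
right; split => j.
  have h := hH s j ngrs; rewrite c0 -ad a1' in h.
  by transitivity (- (0 * q j s - 1 * q j r)); [ring | rewrite h oppr0].
have h := hH r j ngrs; rewrite b0 a1' in h.
by transitivity (1 * q j s - 0 * q j r); [ring | rewrite h].
Qed.

Lemma edge_vp r s : compl_graph G r s -> vp r -> vp s.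
Proof. by move=> e hr; case: (edge_lemma e) => [[]//|[hq _]]; case: (not_both hr hq). Qed.
Lemma edge_vq r s : compl_graph G r s -> vq r -> vq s.
Proof. by move=> e hr; case: (edge_lemma e) => [[hp _]|[]//]; case: (not_both hp hr). Qed.

Lemma conn_prop (P : 'I_n -> Prop) x y :
  (forall r s, compl_graph G r s -> P r -> P s) -> connect (compl_graph G) x y -> P x -> P y.
Proof.
move=> step /connectP [pth hpth ->]; elim: pth x hpth => //= z pth IH x /andP[exz hpth] hx.
by apply: IH hpth _; apply: step exz hx.
Qed.

Lemma comb_lemma : (1 < n)%N -> graph_connected (compl_graph G) ->
  (forall i x, p i x = 0) \/ (forall i x, q i x = 0).
Proof.
move=> n2 hc.
have h0 : (0 < n)%N by apply: ltnW.
pose x0 := Ordinal h0; pose x1 := Ordinal n2.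
have : connect (compl_graph G) x0 x1 := hc x0 x1.
move/connectP => [[|z pth] hpth e].
  by move: e => /= /(congr1 val).
move: hpth => /= /andP[ez _].
case: (edge_lemma ez) => [[hp _]|[hq _]].
  by left => i x; apply: (conn_prop (@edge_vp) (hc x0 x) hp).
by right => i x; apply: (conn_prop (@edge_vq) (hc x0 x) hq).
Qed.
End Comb.


Section Sub.
Variables (R : comNzRingType) (L : lieAlgebra R) (S : L -> Prop) (hS : subalg S).
Lemma sD x y : S x -> S y -> S (x + y).
Proof. by move=> hx hy; have := (let: And3 _ h _ := hS in h) 1 x y hx hy; rewrite scale1r. Qed.
Lemma sZ c x : S x -> S (c *: x).
Proof.
move=> hx; have h0 : S 0 by case: hS.
by have := (let: And3 _ h _ := hS in h) c x 0 hx h0; rewrite addr0.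
Qed.
Lemma sN x : S x -> S (- x).
Proof. by move=> hx; rewrite -scaleN1r; apply: sZ. Qed.
Lemma sB x y : S x -> S y -> S (x - y).
Proof. by move=> hx hy; apply: sD => //; apply: sN. Qed.
Lemma sBr x y : S x -> S y -> S (lie_br x y).
Proof. by case: hS => _ _ h; apply: h. Qed.
End Sub.

Section DS.
Variables (R : comNzRingType) (L : lieAlgebra R) (L1 L2 : L -> Prop).
Hypothesis hds : direct_sum L1 L2.

Let s1 : subalg L1. Proof. by case: hds. Qed.
Let s2 : subalg L2. Proof. by case: hds. Qed.
Let hcomm : forall x y, L1 x -> L2 y -> lie_br x y = 0. Proof. by case: hds. Qed.
Let huniq : forall h1 h2 h1' h2', L1 h1 -> L2 h2 -> L1 h1' -> L2 h2' ->
          h1 + h2 = h1' + h2' -> h1 = h1' /\ h2 = h2'. Proof. by case: hds. Qed.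

Lemma exP h : exists x, L1 x /\ L2 (h - x).
Proof.
case: hds => _ _ hdec _ _; have [h1 [h2 [p1 p2 ->]]] := hdec h.
by exists h1; split => //; rewrite addrAC subrr add0r.
Qed.
Definition pi1 h := projT1 (constructive_indefinite_description _ (exP h)).
Lemma pi1P h : L1 (pi1 h) /\ L2 (h - pi1 h).
Proof. exact: projT2 (constructive_indefinite_description _ (exP h)). Qed.
Lemma pi1_uniq h x : L1 x -> L2 (h - x) -> pi1 h = x.
Proof.
move=> hx hx2; have [p1 p2] := pi1P h.
have := huniq p1 p2 hx hx2; rewrite [pi1 h + _]addrC subrK [x + _]addrC subrK.
by case.
Qed.
Lemma pi1_hom : lie_hom pi1.
Proof.
split.
  move=> c x y; have [x1 x2] := pi1P x; have [y1 y2] := pi1P y.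
  apply: pi1_uniq; first by apply: sD => //; apply: sZ.
  have -> : c *: x + y - (c *: pi1 x + pi1 y) = c *: (x - pi1 x) + (y - pi1 y).
    by rewrite scalerBr opprD !addrA [_ - c *: pi1 x + y]addrAC.
  by apply: sD => //; apply: sZ.
move=> x y; have [x1 x2] := pi1P x; have [y1 y2] := pi1P y.
apply: pi1_uniq; first exact: sBr.
have key : forall u1 u2 v1 v2, L1 u1 -> L2 u2 -> L1 v1 -> L2 v2 ->
    lie_br (u1 + u2) (v1 + v2) - lie_br u1 v1 = lie_br u2 v2.
  move=> u1 u2 v1 v2 hu1 hu2 hv1 hv2.
  rewrite brDl !brDr (hcomm hu1 hv2) (brC u2 v1) (hcomm hv1 hu2).
  by rewrite oppr0 addr0 add0r addrC addKr.
have := key _ _ _ _ x1 x2 y1 y2.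
rewrite [pi1 x + _]addrC subrK [pi1 y + _]addrC subrK => ->.
exact: sBr.
Qed.
Lemma pi1_id h : pi1 (pi1 h) = pi1 h.
Proof. by have [p1 _] := pi1P h; apply: pi1_uniq => //; rewrite subrr; case: s2. Qed.
End DS.

Lemma ds_sym (R : comNzRingType) (L : lieAlgebra R) (L1 L2 : L -> Prop) :
  direct_sum L1 L2 -> direct_sum L2 L1.
Proof.
case=> s1 s2 hdec huniq hcomm; split => //.
- by move=> h; have [h1 [h2 [p1 p2 ->]]] := hdec h; exists h2, h1; rewrite addrC.
- move=> h1 h2 h1' h2' p1 p2 p1' p2' e.
  by have [] := huniq h2 h1 h2' h1' p2 p1 p2' p1'; [rewrite addrC e addrC | move=> -> ->].
- by move=> x y hx hy; rewrite brC hcomm // oppr0.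
Qed.


Unset Implicit Arguments.
Set Strict Implicit.

Theorem lemma4 (R : idomainType) (n : nat) (G : rel 'I_n)
    (L : lieAlgebra R) (a : 'I_n -> L) (L1 L2 : L -> Prop) (g : 'I_n -> L) :
  (2 <= n)%N ->
  symmetric G -> irreflexive G ->
  graph_connected (compl_graph G) ->
  presented G a ->
  direct_sum L1 L2 ->
  (forall i, dcomp1 L1 L2 (a i) (a i + g i) /\ dcomp2 L1 L2 (a i) (- g i)) ->
  (forall i w, is_omega1 a (g i) w -> ~ in_supp a i w) ->
  forall i, g i = 0.
Proof.
move=> n2 hG _ hc hp hds hdec hsupp.
have [eta [heta etaa _]] := hp.2 (NLie R G) (@gen R n G) (@gen_rel R n G hG).
pose eps (y : L) : 'rV[R]_n := (eta y).1.
have epsL : forall (c : R) x y, eps (c *: x + y) = c *: eps x + eps y.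
  by move=> c x y; rewrite /eps (heta.1 c x y).
have epsA : forall p, eps (a p) = \row_j ind R (p == j) by move=> p; rewrite /eps etaa.
have epsB : forall x y, eps (lie_br x y) = 0 by move=> x y; rewrite /eps (heta.2 x y).
have hds' := ds_sym hds.
pose p1 := pi1 hds; pose p2 := pi1 hds'.
have p1a : forall i, p1 (a i) = a i + g i.
  by move=> i; have [[h1 h2] _] := hdec i; apply: pi1_uniq.
have p2a : forall i, p2 (a i) = - g i.
  by move=> i; have [_ [h1 h2]] := hdec i; apply: pi1_uniq.
have p12 : forall h, p1 h + p2 h = h.
  move=> h; have [u1 u2] := pi1P hds h.
  have -> : p2 h = h - p1 h by apply: pi1_uniq => //; rewrite opprB addrC subrK.
  by rewrite addrC subrK.
pose pp := fun i x : 'I_n => eps (p1 (a i)) ord0 x.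
pose qq := fun i x : 'I_n => eps (p2 (a i)) ord0 x.
have hpq : forall i x, pp i x + qq i x = ind R (i == x).
  move=> i x; rewrite /pp /qq.
  have e' : eps (p1 (a i)) + eps (p2 (a i)) = eps (a i).
    by have := epsL 1 (p1 (a i)) (p2 (a i)); rewrite !scale1r p12 => <-.
  by have := congr1 (fun M : 'rV[R]_n => M ord0 x) e'; rewrite epsA !mxE.
have hH : forall i j r s, ~~ G r s -> pp i r * qq j s - pp i s * qq j r = 0.
  move=> i j r s ng.
  have e : eta (lie_br (p1 (a i)) (p2 (a j))) = 0.
    have [_ _ _ _ hcomm] := hds.
    have [u1 _] := pi1P hds (a i); have [u2 _] := pi1P hds' (a j).
    by rewrite hcomm // (hom0 heta).
  have := congr1 (fun z : NLie R G => z.2 r s) e; rewrite (heta.2 _ _) /= mxE (negbTE ng).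
  by move=> ->; rewrite mxE.
case: (comb_lemma hpq hH n2 hc) => hz.
  have z1 : forall y, p1 y = 0.
    apply: (proj_zero hp epsL epsA epsB (pi1_hom hds) (pi1_id hds)).
    by move=> i; apply/rowP => x; rewrite mxE; apply: hz.
  move=> i; exfalso.
  have gi : g i = - a i by apply/eqP; rewrite -addr_eq0 addrC -p1a z1.
  have ai0 : - a i <> 0.
    move=> e; have := epsA i; rewrite -[a i]opprK e oppr0.
    have -> : eps 0 = 0 by have := epsL 1 0 0; rewrite scaler0 addr0 scale1r => h;
      apply: (@addrI _ (eps 0)); rewrite addr0 -h.
    move/rowP/(_ i); rewrite !mxE /ind eqxx /= => /eqP; by rewrite eq_sym oner_eq0.
  pose al := fun _ : 'I_1 => [ffun j : 'I_n => nat_of_bool (i == j)].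
  pose xs := fun _ : 'I_1 => - a i.
  have hdc : mdecomp a (g i) al xs.
    split.
    - by move=> k k' _; rewrite (ord1 k) (ord1 k').
    - move=> k; split => //; exists 1%N, (fun _ => -1), (fun _ => LLeaf i); split.
        by move=> k0 j; rewrite ffunE.
      by rewrite big_ord1 scaleN1r.
    - by rewrite big_ord1 gi.
  apply: (hsupp i (- a i)).
    exists 1%N, al, xs; split => //.
    rewrite big_ord1_cond; suff -> : (\sum_(j < n) al ord0 j == 1)%N by [].
    rewrite (bigD1 i) //= big1 ?ffunE ?eqxx //= => j nj.
    by rewrite ffunE eq_sym (negbTE nj).
  exists 1%N, al, xs; split.
    by rewrite -gi.
  by exists ord0; rewrite ffunE eqxx.
have z2 : forall y, p2 y = 0.
  apply: (proj_zero hp epsL epsA epsB (pi1_hom hds') (pi1_id hds')).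
  by move=> i; apply/rowP => x; rewrite mxE; apply: hz.
by move=> i; apply: oppr_inj; rewrite oppr0 -p2a z2.
Qed.
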